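(* Let $n\ge 1$ and let $R_n=\{s_1,\dots,s_n\}$, where $s_1=0$ and $s_i=1\,0^{i-2}\,1$ for $2\le i\le n$. Then for every code $C_n\in\mathbb{S}_n$, every codeword of $C_n$ has some codeword of $R_n$ as a prefix.
   Context: All strings are finite binary strings; $0^{r}$ denotes the string of $r$ zeros and $|w|$ the length of $w$. A palindrome is a string equal to its reversal. A symmetric fix-free code is a finite set of binary palindromes no one of which is a proper prefix of another. $\mathbb{S}_n$ denotes the set of symmetric fix-free codes with exactly $n$ codewords which do not contain the one-bit string $1$ and all of whose codewords have length at most $n$. ''Prefix'' includes the case of equality. *)

(* Defs.v *)
From mathcomp Require Import all_boot.
Set Implicit Arguments. Unset Strict Implicit. Unset Printing Implicit Defensive.

(* Binary strings: seq bool, with false = 0 and true = 1. *)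
Definition bstring := seq bool.

Definition palindrome (w : bstring) : bool := rev w == w.

Definition proper_prefix (u v : bstring) : bool := prefix u v && (u != v).

Definition sym_fixfree (C : seq bstring) : Prop :=
  [/\ uniq C,
      forall w, w \in C -> w != [::],
      forall w, w \in C -> palindrome w &
      forall u v, u \in C -> v \in C -> ~~ proper_prefix u v].

Definition SS (n : nat) (C : seq bstring) : Prop :=
  [/\ sym_fixfree C, size C = n, [:: true] \notin C &
      forall w, w \in C -> size w <= n].

Definition s_ (i : nat) : bstring :=
  if i == 1 then [:: false] else true :: rcons (nseq (i - 2) false) true.

Definition R_ (n : nat) : seq bstring := [seq s_ i | i <- iota 1 n].

(* Main.v *)
Require Import Defs.
From mathcomp Require Import all_boot.

Lemma split_true (t : seq bool) : true \in t ->
  t = nseq (index true t) false ++ true :: drop (index true t).+1 t.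
Proof.
elim: t => [//|b t IH]; case: b => /=; first by rewrite drop0.
rewrite in_cons /= => /IH {1}->; done.
Qed.

Lemma prefix_cat_l (s r : seq bool) : prefix s (s ++ r).
Proof. exact: prefix_prefix. Qed.

Theorem lemma1 (n : nat) (C : seq bstring) :
  1 <= n -> SS n C ->
  forall w, w \in C -> exists2 s, s \in R_ n & prefix s w.
Proof.
move=> n1 [[_ Hne Hpal _] _ H1 Hsz] w wC.
have ne := Hne w wC; have pal := Hpal w wC; have sz := Hsz w wC.
case: w wC ne pal sz => [//|b t] wC _ pal sz.
case: b wC pal sz => wC pal sz.
- have tne : t != [::] by case: t wC {pal sz} => // wC; rewrite wC in H1.
  have tt : true \in t.
    move: pal; rewrite /palindrome rev_cons => /eqP E.
    case/lastP: t tne E {wC sz} => [//|t' x] _.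
    rewrite rev_rcons /= => -[-> _]; by rewrite mem_rcons mem_head.
  set j := index true t.
  have jl : j < size t by rewrite index_mem.
  exists (s_ j.+2).
    apply/mapP; exists j.+2 => //; rewrite mem_iota /=.
    rewrite /= in sz; rewrite add1n ltnS; exact: leq_ltn_trans jl sz.
  rewrite /s_ /= subn2 /=.
  have E := @split_true t tt; rewrite -/j in E; rewrite [in X in prefix _ X]E -cat_rcons.
  exact: prefix_cat_l.
- exists (s_ 1); last by rewrite /s_ /= prefix0s.
  apply/mapP; exists 1 => //; rewrite mem_iota /= add1n ltnS n1 //.
Qed.
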